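(* Let $n \ge 2$ and let $\mathcal{B}$ be a non-degenerate deformation of the type $B_n$ Coxeter arrangement in $\mathbb{R}^n$. Let $H_0 \in \mathcal{B}$. Then the restriction $\mathcal{B}^{H_0}$, viewed in $\mathbb{R}^{n-1}$ via the isomorphism $H_0 \to \mathbb{R}^{n-1}$ that deletes one coordinate (the coordinate $x_k$ if $H_0 : x_k = a$, and the coordinate $x_l$ if $H_0 : x_k \pm x_l = a$ with $k<l$), is a non-degenerate deformation of the type $B_{n-1}$ Coxeter arrangement in $\mathbb{R}^{n-1}$.
   Context: A non-degenerate deformation of the type $B_n$ Coxeter arrangement in $\mathbb{R}^n$ is a finite hyperplane arrangement of the form $\{x_i = a_i^{(1)},\ldots,a_i^{(r_i)}\} \cup \{x_i-x_j = b_{ij}^{(1)},\ldots,b_{ij}^{(s_{ij})}\} \cup \{x_i+x_j = c_{ij}^{(1)},\ldots,c_{ij}^{(t_{ij})}\}$ (over $1\le i\le n$ resp. $1 \le i\ne j\le n$) with all constants real and $r_i,s_{ij},t_{ij} \ge 1$, i.e. every hyperplane is parallel to one of $x_i=0$, $x_i-x_j=0$, $x_i+x_j=0$, and each of these directions contains at least one hyperplane of the arrangement. For $H_0 \in \mathcal{B}$, the restriction is $\mathcal{B}^{H_0} = \{H_0 \cap H : H \in \mathcal{B}\setminus\{H_0\},\ H_0\cap H \neq \emptyset\}$, an arrangement in the affine space $H_0$. *)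

(* Defs.v *)
From HB Require Import structures.
From mathcomp Require Import all_boot all_order all_algebra.
From mathcomp Require Import boolp classical_sets cardinality reals.
Set Implicit Arguments. Unset Strict Implicit. Unset Printing Implicit Defensive.
Import Order.TTheory GRing.Theory Num.Theory.
Local Open Scope ring_scope.
Local Open Scope classical_set_scope.

Section BArr.
Variable R : realType.

Definition hp_coord n (i : 'I_n) (a : R) : set 'rV[R]_n :=
  [set x | x ord0 i = a].
Definition hp_minus n (i j : 'I_n) (b : R) : set 'rV[R]_n :=
  [set x | x ord0 i - x ord0 j = b].
Definition hp_plus n (i j : 'I_n) (c : R) : set 'rV[R]_n :=
  [set x | x ord0 i + x ord0 j = c].

Definition nondeg_Bdef n (B : set (set 'rV[R]_n)) : Prop :=
  finite_set B /\
  (forall H, B H ->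
      (exists i a, H = hp_coord i a)
   \/ (exists i j b, i != j /\ H = hp_minus i j b)
   \/ (exists i j c, i != j /\ H = hp_plus i j c)) /\
  (forall i, exists a, B (hp_coord i a)) /\
  (forall i j, i != j -> exists b, B (hp_minus i j b)) /\
  (forall i j, i != j -> exists c, B (hp_plus i j c)).

Definition restriction n (B : set (set 'rV[R]_n)) (H0 : set 'rV[R]_n)
  : set (set 'rV[R]_n) :=
  [set K | exists2 H, B H /\ H <> H0 & K = H0 `&` H /\ K !=set0].

Definition delete_coord m (d : 'I_m.+1) (x : 'rV[R]_m.+1) : 'rV[R]_m :=
  \row_(j < m) x ord0 (lift d j).

Definition deletion_index m (H0 : set 'rV[R]_m.+1) (d : 'I_m.+1) : Prop :=
  (exists a, H0 = hp_coord d a) \/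
  (exists (k : 'I_m.+1) a, (k < d)%N /\ (H0 = hp_minus k d a \/ H0 = hp_plus k d a)).

Definition restriction_del m (B : set (set 'rV[R]_m.+1)) (H0 : set 'rV[R]_m.+1)
  (d : 'I_m.+1) : set (set 'rV[R]_m) :=
  [set delete_coord d @` K | K in restriction B H0].

End BArr.

(* Main.v *)
Require Import Defs.
From HB Require Import structures.
From mathcomp Require Import all_boot all_order all_algebra.
From mathcomp Require Import boolp classical_sets cardinality reals.
From mathcomp Require Import lra.
Set Implicit Arguments. Unset Strict Implicit. Unset Printing Implicit Defensive.
Import Order.TTheory GRing.Theory Num.Theory.
Local Open Scope ring_scope.
Local Open Scope classical_set_scope.

Section Main.
Variable R : realType.
Variable m : nat.
Variable d : 'I_m.+1.
Variable k : 'I_m.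
Variables (al sg : R).

Definition up (y : 'rV[R]_m) : 'rV[R]_m.+1 :=
  \row_j (if unlift d j is Some j' then y ord0 j' else al + sg * y ord0 k).

Definition H0' : set 'rV[R]_m.+1 :=
  [set x | x ord0 d = al + sg * x ord0 (lift d k)].

Definition pre (H : set 'rV[R]_m.+1) : set 'rV[R]_m := [set y | H (up y)].

Definition good n (H : set 'rV[R]_n) : Prop :=
      (exists i a, H = hp_coord i a)
   \/ (exists i j b, i != j /\ H = hp_minus i j b)
   \/ (exists i j c, i != j /\ H = hp_plus i j c).

Lemma upL y j : up y ord0 (lift d j) = y ord0 j.
Proof. by rewrite mxE liftK. Qed.

Lemma upD y : up y ord0 d = al + sg * y ord0 k.
Proof. by rewrite mxE unlift_none. Qed.

Lemma del_up y : delete_coord d (up y) = y.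
Proof. by apply/rowP => j; rewrite mxE upL. Qed.

Lemma up_del x : H0' x -> up (delete_coord d x) = x.
Proof.
move=> hx; apply/rowP => j; rewrite mxE.
case: unliftP => [j'|] ->; first by rewrite mxE.
by rewrite mxE hx.
Qed.

Lemma up_H0 y : H0' (up y).
Proof. by rewrite /H0' /= upD upL. Qed.

Lemma img H : delete_coord d @` (H0' `&` H) = pre H.
Proof.
apply/seteqP; split => y /=.
  by case=> x [hx hH] <-; rewrite /pre /= up_del.
by move=> hy; exists (up y); [split=> //; exact: up_H0 | exact: del_up].
Qed.

Lemma preT : pre H0' = setT.
Proof. by apply/seteqP; split => y //= _; exact: up_H0. Qed.

Ltac rwsg := match goal with E : sg = _ |- _ =>
  repeat match goal with H : context [sg] |- _ => lazymatch type of H with sg = _ => fail | _ => rewrite E in H end end;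
  try rewrite E | _ => idtac end.

Ltac seteq := apply/seteqP; split => y;
  rewrite /pre /hp_coord /hp_minus /hp_plus /= ?upL ?upD => h; rwsg; lra.

Ltac degen hne y0 h0 := exfalso; apply: hne; apply/seteqP; split => x;
  rewrite /H0' /hp_coord /hp_minus /hp_plus /= => hx;
  move: h0; rewrite /pre /hp_coord /hp_minus /hp_plus /= ?upL ?upD => h0; rwsg; lra.

Lemma key H : (sg = 0 \/ sg = 1 \/ sg = -1) -> good H ->
  (exists y, pre H y) -> H <> H0' -> good (pre H).
Proof.
move=> hs [[i [a ->]]|[[i [j [b [hij ->]]]]|[i [j [c [hij ->]]]]]] [y0 h0] hne.
- case: (unliftP d i) => [i'|] -> in h0 hne *.
    by left; exists i', a; seteq.
  case: hs => [e|[e|e]]; idtac.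
  + by degen hne y0 h0.
  + by left; exists k, (a - al); seteq.
  + by left; exists k, (al - a); seteq.
- case: (unliftP d i) => [i'|] -> in hij h0 hne *; case: (unliftP d j) => [j'|] -> in hij h0 hne *.
  + right; left; exists i', j', b; split; last by seteq.
    by apply: contra hij => /eqP ->.
  + case: hs => [e|[e|e]]; idtac.
    * by left; exists i', (b + al); seteq.
    * case: (eqVneq i' k) => [ei|ne].
        by rewrite ei in h0 hne *; degen hne y0 h0.
      by right; left; exists i', k, (b + al); split=> //; seteq.
    * case: (eqVneq i' k) => [ei|ne].
        by rewrite ei; left; exists k, ((b + al) / 2); seteq.
      by right; right; exists i', k, (b + al); split=> //; seteq.
  + case: hs => [e|[e|e]]; idtac.
    * by left; exists j', (al - b); seteq.
    * case: (eqVneq j' k) => [ej|ne].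
        by rewrite ej in h0 hne *; degen hne y0 h0.
      by right; left; exists k, j', (b - al); split; [rewrite eq_sym|seteq].
    * case: (eqVneq j' k) => [ej|ne].
        by rewrite ej; left; exists k, ((al - b) / 2); seteq.
      by right; right; exists k, j', (al - b); split; [rewrite eq_sym|seteq].
  + by rewrite eqxx in hij.
- case: (unliftP d i) => [i'|] -> in hij h0 hne *; case: (unliftP d j) => [j'|] -> in hij h0 hne *.
  + right; right; exists i', j', c; split; last by seteq.
    by apply: contra hij => /eqP ->.
  + case: hs => [e|[e|e]]; idtac.
    * by left; exists i', (c - al); seteq.
    * case: (eqVneq i' k) => [ei|ne].
        by rewrite ei; left; exists k, ((c - al) / 2); seteq.
      by right; right; exists i', k, (c - al); split=> //; seteq.
    * case: (eqVneq i' k) => [ei|ne].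
        by rewrite ei in h0 hne *; degen hne y0 h0.
      by right; left; exists i', k, (c - al); split=> //; seteq.
  + case: hs => [e|[e|e]]; idtac.
    * by left; exists j', (c - al); seteq.
    * case: (eqVneq j' k) => [ej|ne].
        by rewrite ej; left; exists k, ((c - al) / 2); seteq.
      by right; right; exists k, j', (c - al); split; [rewrite eq_sym|seteq].
    * case: (eqVneq j' k) => [ej|ne].
        by rewrite ej in h0 hne *; degen hne y0 h0.
      by right; left; exists j', k, (c - al); split=> //; seteq.
  + by rewrite eqxx in hij.
Qed.


Lemma mem B H : B H -> pre H <> setT -> (exists y, pre H y) ->
  restriction_del B H0' d (pre H).
Proof.
move=> hB hT [y hy]; exists (H0' `&` H); last exact: img.
exists H.
  split => // e; apply: hT; by rewrite e preT.
split=> //; exists (up y); split; [exact: up_H0 | exact: hy].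
Qed.

Definition wit n (i : 'I_n) (c : R) : 'rV[R]_n := \row_l (if l == i then c else 0).

Lemma witE n (i : 'I_n) c l : wit i c ord0 l = if l == i then c else 0.
Proof. by rewrite mxE. Qed.

Lemma main B : (sg = 0 \/ sg = 1 \/ sg = -1) -> nondeg_Bdef B -> B H0' ->
  nondeg_Bdef (restriction_del B H0' d).
Proof.
move=> hs [fin [forms [cc [cm cp]]]] hB0.
split.
  apply: finite_image.
  apply: (sub_finite_set _ (finite_image (fun H => H0' `&` H) fin)).
  by move=> K [H [hB _] [-> _]]; exists H.
split.
  move=> S [K [H [hB hne] [-> [x hx]]] <-].
  rewrite img; apply: key => //; first exact: forms.
  by exists (delete_coord d x); rewrite -img; exists x.
split.
  move=> i; case: (cc (lift d i)) => a ha; exists a.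
  have e : pre (hp_coord (lift d i) a) = hp_coord i a.
    by apply/seteqP; split => y; rewrite /pre /hp_coord /= upL.
  rewrite -e; apply: mem => //; rewrite e.
    move/(congr1 (fun P => P (wit i (a + 1)))); rewrite /hp_coord /= witE eqxx.
    move=> h; have : a + 1 = a by rewrite h. lra.
  by exists (wit i a); rewrite /hp_coord /= witE eqxx.
split.
  move=> i j hij.
  have hij' : lift d i != lift d j by rewrite (inj_eq (@lift_inj _ d)).
  case: (cm _ _ hij') => b hb; exists b.
  have e : pre (hp_minus (lift d i) (lift d j) b) = hp_minus i j b.
    by apply/seteqP; split => y; rewrite /pre /hp_minus /= !upL.
  rewrite -e; apply: mem => //; rewrite e.
    move/(congr1 (fun P => P (wit i (b + 1)))); rewrite /hp_minus /= !witE eqxx eq_sym (negbTE hij).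
    move=> h; have : b + 1 - 0 = b by rewrite h. lra.
  by exists (wit i b); rewrite /hp_minus /= !witE eqxx eq_sym (negbTE hij) subr0.
move=> i j hij.
have hij' : lift d i != lift d j by rewrite (inj_eq (@lift_inj _ d)).
case: (cp _ _ hij') => b hb; exists b.
have e : pre (hp_plus (lift d i) (lift d j) b) = hp_plus i j b.
  by apply/seteqP; split => y; rewrite /pre /hp_plus /= !upL.
rewrite -e; apply: mem => //; rewrite e.
  move/(congr1 (fun P => P (wit i (b + 1)))); rewrite /hp_plus /= !witE eqxx eq_sym (negbTE hij).
  move=> h; have : b + 1 + 0 = b by rewrite h. lra.
by exists (wit i b); rewrite /hp_plus /= !witE eqxx eq_sym (negbTE hij) addr0.
Qed.

End Main.

Theorem lemma3p2 (R : realType) (m : nat) (hm : (1 <= m)%N)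
  (B : set (set 'rV[R]_m.+1)) (H0 : set 'rV[R]_m.+1) (d : 'I_m.+1) :
  nondeg_Bdef B -> B H0 -> deletion_index H0 d ->
  nondeg_Bdef (restriction_del B H0 d).
Proof.
move=> hB hB0 [[a e]|[k0 [a [hk [e|e]]]]].
  have E : H0 = H0' d (Ordinal hm) a 0.
    rewrite e; apply/seteqP; split => x; rewrite /H0' /hp_coord /= => h; lra.
  by rewrite E in hB0 *; apply: main => //; left.
all: have hk' : (k0 < m)%N := leq_trans hk (ltn_ord d : (d <= m)%N).
all: have hl : lift d (Ordinal hk') = k0 by apply/val_inj; rewrite /= /bump leqNgt hk.
  have E : H0 = H0' d (Ordinal hk') (- a) 1.
    rewrite e; apply/seteqP; split => x; rewrite /H0' /hp_minus /= hl => h; lra.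
  by rewrite E in hB0 *; apply: main => //; right; left.
have E : H0 = H0' d (Ordinal hk') a (-1).
  rewrite e; apply/seteqP; split => x; rewrite /H0' /hp_plus /= hl => h; lra.
by rewrite E in hB0 *; apply: main => //; right; right.
Qed.
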